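(* There exists a 5-chromatic planar graph if and only if there exists a 4-chromatic planar graph $G$ with distinct vertices $u,v$ such that $\{u,v\}$ is an implicit-edge of $G$ and the vertex contraction $G/u,v$ is planar.
   Context: All graphs are finite, simple and connected. For a graph $G$ and vertices $u,v$, $G-uv$ denotes $G$ with the edge $uv$ removed if $uv\in E(G)$ (and $G$ itself otherwise). A $k$-coloring is a proper vertex coloring with colors from $\{1,\dots,k\}$. Given a $k$-chromatic graph $G$, a pair of distinct vertices $\{u,v\}$ is an implicit-edge of $G$ iff there is no $k$-coloring $c$ of $G-uv$ with $c(u)=c(v)$. The vertex contraction $G/u,v$ replaces $u,v$ by a single new vertex $w$ with $N(w)=(N(u)\cup N(v))\setminus\{u,v\}$. *)

(* Defs.v *)
From mathcomp Require Import all_boot.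
From Stdlib Require Import Reals.
Unset Printing Implicit Defensive.

Definition simple_connected_graph {T : finType} (e : rel T) : Prop :=
  symmetric e /\ irreflexive e /\ (forall x y : T, connect e x y).

Definition proper_coloring {T : finType} (e : rel T) {k : nat} (c : T -> 'I_k) : Prop :=
  forall x y : T, e x y -> c x != c y.

Definition colorable {T : finType} (e : rel T) (k : nat) : Prop :=
  exists c : T -> 'I_k, proper_coloring e c.

Definition chromatic {T : finType} (e : rel T) (k : nat) : Prop :=
  colorable e k /\ ~ colorable e k.-1.

Definition remove_edge {T : finType} (e : rel T) (u v : T) : rel T :=
  fun x y => e x y && ~~ (((x == u) && (y == v)) || ((x == v) && (y == u))).

Definition implicit_edge {T : finType} (e : rel T) (k : nat) (u v : T) : Prop :=
  u != v /\
  ~ (exists c : T -> 'I_k, proper_coloring (remove_edge e u v) c /\ c u = c v).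

(* Vertex contraction G/u,v: vertex set V \ {v}, the vertex u plays the role of
   the new vertex w; a vertex a of G is sent to [merge a] (v |-> u). *)
Definition merge {T : finType} (u v : T) (a : T) : T := if a == v then u else a.

Definition contract_vertex {T : finType} (v : T) : finType := {x : T | x != v}.

Definition contract_rel {T : finType} (e : rel T) (u v : T) : rel (contract_vertex v) :=
  fun x y => (val x != val y) &&
    [exists a : T, exists b : T,
       [&& e a b, merge u v a == val x & merge u v b == val y]].

Local Open Scope R_scope.

Definition planar {T : finType} (e : rel T) : Prop :=
  exists (p : T -> R * R) (arc : T -> T -> R -> R * R),
    (forall x y : T, p x = p y -> x = y) /\
    (forall x y : T, e x y ->
       arc x y 0 = p x /\ arc x y 1 = p y /\
       (forall t : R, continuity_pt (fun s => fst (arc x y s)) t) /\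
       (forall t : R, continuity_pt (fun s => snd (arc x y s)) t) /\
       (forall s t : R, 0 <= s <= 1 -> 0 <= t <= 1 -> arc x y s = arc x y t -> s = t) /\
       (forall (z : T) (t : R), 0 < t < 1 -> arc x y t <> p z) /\
       (forall (x' y' : T) (s t : R), e x' y' ->
          ~ ((x' = x /\ y' = y) \/ (x' = y /\ y' = x)) ->
          0 < s < 1 -> 0 < t < 1 -> arc x y s <> arc x' y' t)).

(* Main.v *)
Require Import Defs.
From mathcomp Require Import all_boot.
From Stdlib Require Import Reals.
From Stdlib Require Import Lra Classical.
From mathcomp Require Import ssrnat fintype finset.

Definition colorable_on {T : finType} (F : {set T * T}) (S : {set T}) (k : nat) :=
  exists c : T -> 'I_k, forall x y, x \in S -> y \in S -> (x, y) \in F -> c x != c y.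

Lemma exists_min (T : finType) (P : {set T} -> {set T * T} -> Prop) S0 F0 :
  P S0 F0 -> exists S F, P S F /\
    forall S' F', P S' F' -> #|S| + #|F| <= #|S'| + #|F'|.
Proof.
suff H : forall n S F, P S F -> #|S| + #|F| <= n -> exists S F, P S F /\
    forall S' F', P S' F' -> #|S| + #|F| <= #|S'| + #|F'|.
  by move=> HP; apply: (H _ S0 F0 HP (leqnn _)).
elim=> [|n IH] S F HP Hn.
  exists S, F; split=> // S' F' _; by rewrite (leq_trans Hn).
case: (classic (exists S' F', P S' F' /\ #|S'| + #|F'| <= n)) =>
  [[S' [F' [H1 H2]]]|Hno]; first exact: IH H1 H2.
exists S, F; split=> // S' F' HP'; rewrite leqNgt; apply/negP=> Hlt.
apply: Hno; exists S', F'; split=> //; rewrite -ltnS (leq_trans Hlt Hn) //.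
Qed.

Lemma planar_inj (T1 T2 : finType) (e1 : rel T1) (e2 : rel T2) (f : T1 -> T2) :
  injective f -> (forall x y, e1 x y -> e2 (f x) (f y)) -> planar e2 -> planar e1.
Proof.
move=> finj fe [p [arc [Hp Ha]]].
exists (fun x => p (f x)), (fun x y => arc (f x) (f y)); split.
  by move=> x y /Hp /finj.
move=> x y /fe /Ha [H1 [H2 [H3 [H4 [H5 [H6 H7]]]]]].
do 5 (split; first by []).
split; first by move=> z; apply: H6.
move=> x' y' s t /fe He Hne; apply: H7 => // contra; apply: Hne.
by case: contra => [[/finj -> /finj ->]|[/finj -> /finj ->]]; [left|right].
Qed.

Lemma key (T : finType) (e : rel T) : symmetric e -> irreflexive e -> planar e ->
  ~ colorable e 4 ->
  exists (T' : finType) (e' : rel T') (a b : T'),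
    simple_connected_graph e' /\ planar e' /\ colorable e' 5 /\ ~ colorable e' 4 /\
    e' a b /\ colorable (remove_edge e' a b) 4.
Proof.
move=> sym irr pl nc.
pose valid (S : {set T}) (F : {set T * T}) := (forall x y, (x, y) \in F -> e x y) /\ ~ colorable_on F S 4.
have [S [F [[FE NC] Hmin]]] : exists (S : {set T}) (F : {set T * T}), valid S F /\
    forall (S' : {set T}) (F' : {set T * T}), valid S' F' -> #|S| + #|F| <= #|S'| + #|F'|.
  apply: (@exists_min T valid setT [set p | e p.1 p.2]); split.
    by move=> x y; rewrite inE.
  move=> [c Hc]; apply: nc; exists c => x y exy; apply: Hc; rewrite ?inE //.
have smaller : forall (S' : {set T}) (F' : {set T * T}), #|S'| + #|F'| < #|S| + #|F| ->
    (forall x y, (x, y) \in F' -> e x y) -> colorable_on F' S' 4.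
  move=> S' F' Hlt FE'; apply: NNPP => Hn.
  by have := Hmin S' F' (conj FE' Hn); rewrite leqNgt Hlt.
pose T' := {x : T | x \in S}.
pose e' : rel T' := fun x y => ((val x, val y) \in F) || ((val y, val x) \in F).
have e'E : forall x y : T', e' x y -> e (val x) (val y).
  move=> x y /orP [/FE //|/FE]; by rewrite sym.
have nc' : ~ colorable e' 4.
  move=> [c' Hc']; apply: NC.
  exists (fun x => match insub x with Some x' => c' x' | None => ord0 end).
  move=> x y xS yS xyF.
  case: insubP => [x' _ vx|/negP //]; case: insubP => [y' _ vy|/negP //].
  by apply: Hc'; rewrite /e' vx vy xyF.
have [S0|[w wS]] := set_0Vmem S.
  by exfalso; apply: NC; exists (fun _ => ord0) => x y; rewrite S0 inE.
have [a [b [aS [bS abF]]]] : exists a b, a \in S /\ b \in S /\ (a, b) \in F.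
  apply: NNPP => Hn; apply: NC; exists (fun _ => ord0) => x y xS yS xyF.
  by exfalso; apply: Hn; exists x, y.
exists T', e', (Sub a aS), (Sub b bS).
split; last split; last split; last split; last split.
- split; first by move=> x y; rewrite /e' orbC.
  split; first by move=> x; apply/negP => /e'E; rewrite irr.
  move=> x0 y0; apply/negPn/negP => Hnc.
  pose S1 := [set z in S | [exists z' : T', (val z' == z) && connect e' x0 z']].
  have S1S : forall z, z \in S1 -> z \in S by move=> z; rewrite inE => /andP [].
  have S1cl : forall x y, x \in S1 -> y \in S ->
      ((x, y) \in F) || ((y, x) \in F) -> y \in S1.
    move=> x y; rewrite inE => /andP [xS /existsP [z' /andP [/eqP vz cz]]] yS Hxy.
    rewrite inE yS /=; apply/existsP; exists (Sub y yS); rewrite /= eqxx /=.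
    apply: (connect_trans cz); apply: connect1; by rewrite /e' vz /=.
  have [c1 Hc1] : colorable_on F S1 4.
    apply: smaller => //; rewrite ltn_add2r; apply: proper_card; apply/properP.
    split; first by apply/subsetP.
    exists (val y0); first exact: valP.
    rewrite inE negb_and; apply/orP; right; rewrite negb_exists; apply/forallP => z'.
    apply/negP => /andP [/eqP /val_inj -> ]; exact/negP.
  have [c2 Hc2] : colorable_on F (S :\: S1) 4.
    apply: smaller => //; rewrite ltn_add2r; apply: proper_card; apply/properP.
    split; first by apply/subsetP => z; rewrite inE => /andP [].
    exists (val x0); first exact: valP.
    rewrite inE negb_and negbK; apply/orP; left.
    rewrite inE (valP x0) /=; apply/existsP; exists x0; by rewrite eqxx connect0.
  apply: NC; exists (fun x => if x \in S1 then c1 x else c2 x) => x y xS yS xyF.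
  case: ifP => xS1; case: ifP => yS1.
  + exact: Hc1.
  + by rewrite (S1cl x y xS1 yS) ?xyF in yS1.
  + by rewrite (S1cl y x yS1 xS) ?xyF ?orbT in xS1.
    + apply: Hc2 => //; by rewrite inE ?xS1 ?yS1.
- exact: (@planar_inj T' T e' e val val_inj e'E pl).
- have [c4 Hc4] : colorable_on F (S :\ w) 4.
    by apply: smaller => //; rewrite ltn_add2r (cardsD1 w S) wS.
  pose c5 x : 'I_5 := if x == w then ord_max else widen_ord (leqnSn 4) (c4 x).
  have H5 : forall x y, x \in S -> y \in S -> (x, y) \in F -> c5 x != c5 y.
    move=> x y xS yS xyF; have exy := FE _ _ xyF.
    rewrite /c5; case: (x =P w) => [xw|/eqP xw]; case: (y =P w) => [yw|/eqP yw].
    + by move: exy; rewrite xw yw irr.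
    + by apply/eqP => /(congr1 val) /= H; have := ltn_ord (c4 y); rewrite -H.
    + by apply/eqP => /(congr1 val) /= H; have := ltn_ord (c4 x); rewrite H.
    + apply/eqP => /(congr1 val) /= /val_inj H; move: (Hc4 x y).
      by rewrite !inE xw yw xS yS xyF H eqxx => /(_ isT isT isT).
  exists (fun x => c5 (val x)) => x y /orP [] Hxy.
    by apply: H5 => //; apply: valP.
  by rewrite eq_sym; apply: H5 => //; apply: valP.
- exact: nc'.
- by rewrite /e' /= abF.
- have [c Hc] : colorable_on (F :\ (a, b)) S 4.
    apply: smaller; first by rewrite ltn_add2l (cardsD1 (a, b) F) abF.
    by move=> x y; rewrite inE => /andP [_ /FE].
  exists (fun x => c (val x)) => x y.
  rewrite /remove_edge /e' => /andP [/orP [] Hxy Hne].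
    apply: Hc; try apply: valP.
    rewrite in_setD1 Hxy andbT; apply/negP => /eqP [Hx Hy].
    have xa : x = Sub a aS by apply: val_inj.
    have yb : y = Sub b bS by apply: val_inj.
    by move: Hne; rewrite xa yb !eqxx.
  rewrite eq_sym; apply: Hc; try apply: valP.
  rewrite in_setD1 Hxy andbT; apply/negP => /eqP [Hy Hx].
  have xa : y = Sub a aS by apply: val_inj.
  have yb : x = Sub b bS by apply: val_inj.
  by move: Hne; rewrite xa yb !eqxx orbT.
Qed.

Section Sub.
Local Open Scope R_scope.

Lemma cont_aff (f : R -> R) (al be : R) :
  (forall t, continuity_pt f t) -> forall t, continuity_pt (fun s => f (al + be * s)) t.
Proof.
move=> Hf t.
apply: (continuity_pt_comp (fun s => al + be * s) f t); last exact: Hf.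
apply: continuity_pt_plus; first by apply: continuity_pt_const => ? ?.
apply: continuity_pt_mult; first by apply: continuity_pt_const => ? ?.
by apply: derivable_continuous_pt; apply: (derivable_pt_id t).
Qed.
End Sub.

Definition sub_rel {T : finType} (e : rel T) (a b : T) : rel (option T) :=
  fun x y => match x, y with
  | Some x, Some y => e x y && ~~ (((x == a) && (y == b)) || ((x == b) && (y == a)))
  | Some x, None => (x == a) || (x == b)
  | None, Some y => (y == a) || (y == b)
  | None, None => false
  end.

Section S.
Local Open Scope R_scope.

Lemma planar_subdiv (T : finType) (e : rel T) (a b : T) :
  e a b -> a != b -> planar e -> planar (sub_rel e a b).
Proof.
move=> eab anb [p [arc [Hp Ha]]].
have [g0 [g1 [gc1 [gc2 [ginj [gav gdis]]]]]] := Ha a b eab.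
set g := arc a b in g0 g1 gc1 gc2 ginj gav gdis.
pose pG o := match o with Some x => p x | None => g (/2) end.
pose side (c : T) (u : R) := if c == a then 0 < u < /2 else /2 < u < 1.
pose arcG (x y : option T) : R -> R * R := match x, y with
  | Some x, Some y => arc x y
  | Some x, None => if x == a then (fun t => g (0 + /2 * t)) else (fun t => g (1 + - /2 * t))
  | None, Some y => if y == a then (fun t => g (/2 + - /2 * t)) else (fun t => g (/2 + /2 * t))
  | None, None => fun _ => g 0
  end.
have View : forall x y, sub_rel e a b x y ->
   (exists x0 y0, x = Some x0 /\ y = Some y0 /\ e x0 y0 /\
       ~~ (((x0 == a) && (y0 == b)) || ((x0 == b) && (y0 == a)))) \/
   (exists c, ((c == a) || (c == b)) /\ (x = Some c /\ y = None \/ x = None /\ y = Some c)).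
  move=> [x|] [y|] //=.
  - move=> /andP [exy ne]; left; by exists x, y.
  - move=> H; right; exists x; split=> //; by left.
  - move=> H; right; exists y; split=> //; by right.
have Dnew : forall x y c t, (x = Some c /\ y = None \/ x = None /\ y = Some c) ->
    0 < t < 1 -> exists u, arcG x y t = g u /\ side c u.
  move=> x y c t [[-> ->]|[-> ->]] Ht; rewrite /arcG /side; case: (c =P a) => ca.
  - exists (0 + /2 * t); split=> //; lra.
  - exists (1 + - /2 * t); split=> //; lra.
  - exists (/2 + - /2 * t); split=> //; lra.
  - exists (/2 + /2 * t); split=> //; lra.
have side01 : forall c u, side c u -> 0 < u < 1.
  by move=> c u; rewrite /side; case: (c == a) => H; lra.
have sideab : forall c c' u u', (c == a) || (c == b) -> (c' == a) || (c' == b) ->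
    side c u -> side c' u' -> g u = g u' -> c = c'.
  move=> c c' u u' Hc Hc' Hs Hs' Hg.
  have Hu := side01 _ _ Hs; have Hu' := side01 _ _ Hs'.
  have uu : u = u' by apply: ginj => //; lra.
  move: Hs Hs'; rewrite /side uu.
  case: (c =P a) => ca; case: (c' =P a) => c'a; try lra.
    by rewrite ca c'a.
  move=> _ _; move: Hc Hc'; rewrite (introF eqP ca) (introF eqP c'a) /=.
  by move=> /eqP -> /eqP ->.
have OldG : forall x y s u, e x y -> ~~ (((x == a) && (y == b)) || ((x == b) && (y == a))) ->
    0 < s < 1 -> 0 < u < 1 -> arc x y s <> g u.
  move=> x y s u exy ne Hs Hu.
  have [_ [_ [_ [_ [_ [_ H7]]]]]] := Ha x y exy.
  apply: H7 => //.
  move=> [[H1 H2]|[H1 H2]]; move: ne; by rewrite -H1 -H2 !eqxx ?orbT.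
have GOld : forall x y s u, e x y -> ~~ (((x == a) && (y == b)) || ((x == b) && (y == a))) ->
    0 < s < 1 -> 0 < u < 1 -> g u <> arc x y s.
  move=> x y s u exy ne Hs Hu.
  apply: gdis => //.
  move=> [[H1 H2]|[H1 H2]]; move: ne; by rewrite H1 H2 !eqxx ?orbT.
exists pG, arcG; split.
  move=> [x|] [y|] //=.
  - by move=> /Hp ->.
  - move=> H; exfalso; apply: (gav x (/2)); [lra|by rewrite H].
  - move=> H; exfalso; apply: (gav y (/2)); [lra|by rewrite H].
move=> x y Hxy.
have F5 : arcG x y 0 = pG x /\ arcG x y 1 = pG y /\
    (forall t, continuity_pt (fun s => fst (arcG x y s)) t) /\
    (forall t, continuity_pt (fun s => snd (arcG x y s)) t) /\
    (forall s t, 0 <= s <= 1 -> 0 <= t <= 1 -> arcG x y s = arcG x y t -> s = t).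
  case: (View x y Hxy) => [[x0 [y0 [-> [-> [exy _]]]]]|[c [Hc [[-> ->]|[-> ->]]]]].
  - by have [H1 [H2 [H3 [H4 [H5 _]]]]] := Ha x0 y0 exy.
  - rewrite /arcG /pG; case: (c =P a) => ca.
      rewrite ca.
      split; first by rewrite (_ : 0 + /2 * 0 = 0); [|lra].
      split; first by rewrite (_ : 0 + /2 * 1 = /2); [|lra].
      split; first exact: (cont_aff (fun u => fst (g u)) _ _ gc1).
      split; first exact: (cont_aff (fun u => snd (g u)) _ _ gc2).
      move=> s t Hs Ht Heq; have: 0 + /2 * s = 0 + /2 * t by apply: (ginj _ _ _ _ Heq); lra.
      lra.
    have cb : c = b by move: Hc; rewrite (introF eqP ca) /= => /eqP.
    rewrite cb.
    split; first by rewrite (_ : 1 + - /2 * 0 = 1); [|lra].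
    split; first by rewrite (_ : 1 + - /2 * 1 = /2); [|lra].
    split; first exact: (cont_aff (fun u => fst (g u)) _ _ gc1).
    split; first exact: (cont_aff (fun u => snd (g u)) _ _ gc2).
    move=> s t Hs Ht Heq; have: 1 + - /2 * s = 1 + - /2 * t by apply: (ginj _ _ _ _ Heq); lra.
    lra.
  - rewrite /arcG /pG; case: (c =P a) => ca.
      rewrite ca.
      split; first by rewrite (_ : /2 + - /2 * 0 = /2); [|lra].
      split; first by rewrite (_ : /2 + - /2 * 1 = 0); [|lra].
      split; first exact: (cont_aff (fun u => fst (g u)) _ _ gc1).
      split; first exact: (cont_aff (fun u => snd (g u)) _ _ gc2).
      move=> s t Hs Ht Heq; have: /2 + - /2 * s = /2 + - /2 * t by apply: (ginj _ _ _ _ Heq); lra.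
      lra.
    have cb : c = b by move: Hc; rewrite (introF eqP ca) /= => /eqP.
    rewrite cb.
    split; first by rewrite (_ : /2 + /2 * 0 = /2); [|lra].
    split; first by rewrite (_ : /2 + /2 * 1 = 1); [|lra].
    split; first exact: (cont_aff (fun u => fst (g u)) _ _ gc1).
    split; first exact: (cont_aff (fun u => snd (g u)) _ _ gc2).
    move=> s t Hs Ht Heq; have: /2 + /2 * s = /2 + /2 * t by apply: (ginj _ _ _ _ Heq); lra.
    lra.
have [F1 [F2 [F3 [F4 F5']]]] := F5.
do 5 (split; first by []).
split.
  move=> z t Ht.
  case: (View x y Hxy) => [[x0 [y0 [-> [-> [exy ne]]]]]|[c [Hc Hf]]].
    case: z => [z|] /=.
      by have [_ [_ [_ [_ [_ [H6 _]]]]]] := Ha x0 y0 exy; apply: H6.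
    apply: OldG => //; lra.
  have [u [-> Hs]] := Dnew x y c t Hf Ht.
  have Hu := side01 _ _ Hs.
  case: z => [z|] /=; first by apply: gav.
  move=> /ginj H; have uh : u = /2 by apply: H; lra.
  move: Hs; rewrite /side uh; case: (c == a); lra.
move=> x' y' s t Hxy' Hne Hs Ht.
case: (View x y Hxy) => [[x0 [y0 [ex [ey [exy ne]]]]]|[c [Hc Hf]]];
case: (View x' y' Hxy') => [[x1 [y1 [ex' [ey' [exy' ne']]]]]|[c' [Hc' Hf']]].
- rewrite ex ey ex' ey' /=.
  have [_ [_ [_ [_ [_ [_ H7]]]]]] := Ha x0 y0 exy.
  apply: H7 => // contra; apply: Hne; rewrite ex ey ex' ey'.
  by case: contra => [[-> ->]|[-> ->]]; [left|right].
- have [u [-> Hu]] := Dnew x' y' c' t Hf' Ht.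
  rewrite ex ey /=; apply: OldG => //; exact: side01 Hu.
- have [u [-> Hu]] := Dnew x y c s Hf Hs.
  rewrite ex' ey' /=; apply: GOld => //; exact: side01 Hu.
- have [u [-> Hu]] := Dnew x y c s Hf Hs.
  have [u' [-> Hu']] := Dnew x' y' c' t Hf' Ht.
  move=> /(sideab _ _ _ _ Hc Hc' Hu Hu') cc; subst c'.
  apply: Hne.
  by case: Hf => [[-> ->]|[-> ->]]; case: Hf' => [[-> ->]|[-> ->]]; auto.
Qed.
End S.

Lemma dir1 (T : finType) (e : rel T) :
  simple_connected_graph e -> planar e -> ~ colorable e 4 ->
  exists (T : finType) (e : rel T) (u v : T),
      simple_connected_graph e /\ planar e /\ chromatic e 4 /\
      u != v /\ implicit_edge e 4 u v /\ planar (contract_rel e u v).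
Proof.
move=> [sym [irr _]] pl nc.
have [T' [e' [a [b [[sym' [irr' conn']] [pl' [_ [nc' [eab colr]]]]]]]]] :=
  @key T e sym irr pl nc.
have anb : a != b by apply/eqP => ab; move: eab; rewrite ab irr'.
pose G := sub_rel e' a b.
have symG : symmetric G.
  move=> [x|] [y|] //=; rewrite sym'; congr (_ && ~~ _); rewrite orbC; congr orb; apply: andbC.
have cS : forall x y, connect G (Some x) (Some y).
  move=> x y; have /connectP [pth Hp ->] := conn' x y.
  elim: pth x Hp => [|z pth IH] x /=; first by move=> _; exact: connect0.
  move=> /andP [exz Hp]; apply: connect_trans (IH z Hp).
  case: (boolP (((x == a) && (z == b)) || ((x == b) && (z == a)))) => Hab.
    apply: (@connect_trans _ _ None).
      apply: connect1 => /=; case/orP: Hab => /andP [/eqP -> _]; by rewrite eqxx ?orbT.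
    apply: connect1 => /=; case/orP: Hab => /andP [_ /eqP ->]; by rewrite eqxx ?orbT.
  by apply: connect1; rewrite /= exz Hab.
have cN : forall x, connect G None (Some x).
  move=> x; apply: (@connect_trans _ _ (Some a)); last exact: cS.
  by apply: connect1; rewrite /= eqxx.
exists (option T'), G, (Some b), None.
split; last split; last split; last split; last split.
- split=> //; split; first by move=> [x|] //=; rewrite irr'.
  move=> [x|] [y|]; [exact: cS| |exact: cN|exact: connect0].
  by rewrite (sym_connect_sym symG); exact: cN.
- exact: planar_subdiv.
- have [c Hc] := colr.
  have cab : c a = c b.
    apply: NNPP => ne; apply: nc'; exists c => x y exy.
    case: (boolP (((x == a) && (y == b)) || ((x == b) && (y == a)))) => Hab.
      case/orP: Hab => /andP [/eqP -> /eqP ->]; apply/eqP => // H; apply: ne; by rewrite H.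
    by apply: Hc; rewrite /remove_edge exy Hab.
  pose col1 := @Ordinal 4 1 isT.
  split.
    exists (fun o => match o with Some x => c x | None => if c a == ord0 then col1 else ord0 end).
    move=> [x|] [y|] //=.
    + by move=> H; apply: Hc.
    + move=> /orP [] /eqP ->; rewrite ?cab; case: (c b =P ord0) => [->|/eqP] //.
    + move=> /orP [] /eqP ->; rewrite ?cab; case: (c b =P ord0) => [->|/eqP] //;
        by rewrite eq_sym.
  move=> [c3 Hc3]; apply: nc'.
  exists (fun x => if x == b then ord_max else widen_ord (leqnSn 3) (c3 (Some x))).
  move=> x y exy.
  case: (x =P b) => xb; case: (y =P b) => yb.
  + by move: exy; rewrite xb yb irr'.
  + by apply/eqP => /(congr1 val) /= H; have := ltn_ord (c3 (Some y)); rewrite -H.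
  + by apply/eqP => /(congr1 val) /= H; have := ltn_ord (c3 (Some x)); rewrite H.
  + have : c3 (Some x) != c3 (Some y).
      by apply: Hc3; rewrite /= exy (introF eqP xb) (introF eqP yb) andbF andFb.
    move=> H; apply/eqP => /(congr1 val) /= /val_inj E; by rewrite E eqxx in H.
- by [].
- split=> //; move=> [c [Hc Heq]]; apply: nc'; exists (fun x => c (Some x)) => x y exy.
  have eG : forall z, (z == a) || (z == b) -> z != b -> c (Some z) != c None.
    move=> z Hz zb; apply: Hc; rewrite /remove_edge /= Hz /=.
    by rewrite (inj_eq (@Some_inj _)) (negbTE zb).
  case: (boolP (((x == a) && (y == b)) || ((x == b) && (y == a)))) => Hab.
    case/orP: Hab => /andP [/eqP -> /eqP ->].
      by rewrite Heq; apply: eG; rewrite ?eqxx.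
    by rewrite Heq eq_sym; apply: eG; rewrite ?eqxx.
  apply: Hc; rewrite /remove_edge /= exy Hab /=.
  by rewrite (_ : (Some y == None) = false) // andbF.
- pose f (x : contract_vertex (None : option T')) : T' :=
    if val x is Some t then t else b.
  apply: (@planar_inj _ _ _ e' f _ _ pl').
    move=> [[x|] hx] [[y|] hy] //=; try (by have := hx; rewrite eqxx); try (by have := hy; rewrite eqxx).
    by move=> Exy; apply: val_inj => /=; congr Some; exact: Exy.
  move=> [[x|] hx] [[y|] hy]; try (by have := hx; rewrite eqxx); try (by have := hy; rewrite eqxx).
  rewrite /contract_rel /f /=.
  move=> /andP [neq /existsP [a' /existsP [b' /and3P [Hab m1 m2]]]].
  move: a' b' Hab m1 m2 => [p|] [q|] //=; rewrite /merge /= => Hab /eqP [mx] /eqP [my]; subst x y.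
  - by case/andP: Hab.
  - case/orP: Hab => /eqP E; rewrite E in neq *; first by [].
    by rewrite eqxx in neq.
  - case/orP: Hab => /eqP E; rewrite E in neq *; first by rewrite sym'.
    by rewrite eqxx in neq.
Qed.

Lemma dir2 (T : finType) (e : rel T) (u v : T) :
  simple_connected_graph e -> u != v -> implicit_edge e 4 u v ->
  planar (contract_rel e u v) ->
  exists (T : finType) (e : rel T),
      simple_connected_graph e /\ planar e /\ chromatic e 5.
Proof.
move=> [sym [irr _]] uv [_ nimp] pl.
pose C := contract_rel e u v.
have symC : symmetric C.
  suff H : forall x y, C x y -> C y x.
    by move=> x y; apply/idP/idP; apply: H.
  move=> x y /andP [neq /existsP [a /existsP [b /and3P [eab ma mb]]]].
  rewrite /C /contract_rel eq_sym neq /=.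
  apply/existsP; exists b; apply/existsP; exists a; by rewrite sym eab ma mb.
have irrC : irreflexive C by move=> x; rewrite /C /contract_rel eqxx.
have ncC : ~ colorable C 4.
  move=> [c Hc]; apply: nimp.
  have mv : forall x, Defs.merge u v x != v.
    by move=> x; rewrite /Defs.merge; case: (x =P v) => [_|/eqP].
  pose m x : contract_vertex v := exist (fun y => y != v) (Defs.merge u v x) (mv x).
  exists (fun x => c (m x)); split.
    move=> x y /andP [exy ne]; apply: Hc.
    rewrite /contract_rel /=; apply/andP; split.
      rewrite /m /= /Defs.merge; case: (x =P v) => xv; case: (y =P v) => yv.
      + by move: exy; rewrite xv yv irr.
      + apply/eqP => uy; move: ne; by rewrite xv -uy !eqxx orbT.
      + apply/eqP => xu; move: ne; by rewrite yv xu !eqxx.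
      + apply/eqP => xy; move: exy; by rewrite xy irr.
    by apply/existsP; exists x; apply/existsP; exists y; rewrite exy !eqxx.
  congr c; apply: val_inj; rewrite /= /Defs.merge eqxx.
  by rewrite (negbTE uv).
have [T' [e' [a [b [Hs [pl' [c5 [nc' _]]]]]]]] := @key _ C symC irrC pl ncC.
by exists T', e'.
Qed.

Theorem theorem7 :
  (exists (T : finType) (e : rel T),
      simple_connected_graph e /\ planar e /\ chromatic e 5) <->
  (exists (T : finType) (e : rel T) (u v : T),
      simple_connected_graph e /\ planar e /\ chromatic e 4 /\
      u != v /\ implicit_edge e 4 u v /\ planar (contract_rel e u v)).
Proof.
split.
- move=> [T [e [Hs [pl [_ nc4]]]]]; exact: (@dir1 T e Hs pl nc4).
- move=> [T [e [u [v [Hs [pl [_ [uv [imp plc]]]]]]]]]; exact: (@dir2 T e u v Hs uv imp plc).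
Qed.
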